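(* Let $F$ be a forest, let $T_1,\ldots,T_\ell$ be trees of $F$ (subgraphs of $F$ that are trees), and let $H$ be the graph with vertex set $\{1,\ldots,\ell\}$ in which distinct $i,j$ are adjacent if and only if $T_i,T_j$ are not anticomplete. If $H$ is bipartite then $H$ is a forest.
   Context: Two subgraphs of a graph are anticomplete if their vertex sets are disjoint and no edge of the graph joins a vertex of one to a vertex of the other. *)

(* Defs.v *)
From mathcomp Require Import all_boot.
Set Implicit Arguments. Unset Strict Implicit. Unset Printing Implicit Defensive.

Definition simple_graph (V : finType) (e : rel V) : Prop :=
  irreflexive e /\ symmetric e.

Definition is_cycle (V : finType) (e : rel V) (c : seq V) : bool :=
  (2 < size c) && path.cycle e c && uniq c.

Definition forest (V : finType) (e : rel V) : Prop :=
  simple_graph e /\ forall c : seq V, ~~ is_cycle e c.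

Definition subgraph (V : finType) (e : rel V) (S : {set V}) (es : rel V) : Prop :=
  symmetric es /\ forall x y, es x y -> [&& e x y, x \in S & y \in S].

Definition is_tree (V : finType) (S : {set V}) (es : rel V) : Prop :=
  S != set0 /\ (forall x y, x \in S -> y \in S -> connect es x y)
  /\ forall c : seq V, ~~ is_cycle es c.

Definition tree_of (V : finType) (e : rel V) (S : {set V}) (es : rel V) : Prop :=
  subgraph e S es /\ is_tree S es.

Definition anticomplete (V : finType) (e : rel V) (A B : {set V}) : bool :=
  [disjoint A & B] && [forall x in A, forall y in B, ~~ e x y].

Definition bipartite (W : finType) (h : rel W) : Prop :=
  exists col : W -> bool, forall i j, h i j -> col i != col j.

Definition touch_graph (V : finType) (e : rel V) (l : nat) (S : 'I_l -> {set V})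
  : rel 'I_l :=
  fun i j => (i != j) && ~~ anticomplete e (S i) (S j).

(* Main.v *)
Require Import Defs.
From mathcomp Require Import all_boot zify.
Set Implicit Arguments. Unset Strict Implicit. Unset Printing Implicit Defensive.

Definition rst (V : finType) (e : rel V) (X : {set V}) : rel V :=
  fun a b => [&& e a b, a \in X & b \in X].
Definition conn (V : finType) (e : rel V) (X : {set V}) : Prop :=
  forall a b, a \in X -> b \in X -> connect (rst e X) a b.
Definition eavoid (V : finType) (e : rel V) (x y : V) : rel V :=
  fun a b => e a b && ~~ ([&& a == x & b == y] || [&& a == y & b == x]).

Lemma EL (V : finType) (e : rel V) x y :
  forest e -> e x y -> connect (eavoid e x y) x y -> False.
Proof.
move=> [[irr sym] nocyc] exy /connectP [p pp yE].
have: last x p = y by rewrite yE.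
case: (shortenP pp) => p' pp' up' _ Hl. clear pp yE. subst y.
have pe : path e x p' by apply: sub_path pp' => a b /andP[].
apply: (negP (nocyc (x :: p'))).
rewrite /is_cycle up' andbT /= rcons_path pe /=.
case: p' pp' up' pe exy => [|a [|b p'']] /=.
- by move=> _ _ _ h; rewrite irr in h.
- by move=> /andP[H _] _ _ _; move: H; rewrite /eavoid !eqxx /= andbF.
- by move=> _ _ _ h; rewrite sym.
Qed.
Lemma rst_mono (V : finType) (e : rel V) (X Z : {set V}) :
  X \subset Z -> forall a b, connect (rst e X) a b -> connect (rst e Z) a b.
Proof.
move=> /subsetP sXZ; apply: connect_sub => a b /and3P[eab aX bX].
by apply: connect1; rewrite /rst eab (sXZ _ aX) (sXZ _ bX).
Qed.

Lemma rst_avoid (V : finType) (e : rel V) (X : {set V}) x y :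
  (x \notin X) || (y \notin X) ->
  forall a b, connect (rst e X) a b -> connect (eavoid e x y) a b.
Proof.
move=> H; apply: connect_sub => a b /and3P[eab aX bX].
apply: connect1; rewrite /eavoid eab /=.
apply/negP => /orP[] /andP[/eqP ? /eqP ?]; subst;
  by move: H; rewrite aX bX.
Qed.

Lemma eavoid_sym (V : finType) (e : rel V) x y :
  symmetric e -> symmetric (eavoid e x y).
Proof.
move=> sym a b; rewrite /eavoid sym; congr (_ && ~~ _).
by case: (a == x); case: (b == y); case: (a == y); case: (b == x).
Qed.

Lemma lemK (V : finType) (e : rel V) (X Y : {set V}) x y :
  forest e -> conn e X -> conn e Y ->
  x \in X -> x \notin Y -> y \in Y -> y \notin X -> e x y ->
  (exists z, z \in X /\ z \in Y) \/
  (exists x' y', [/\ x' \in X, y' \in Y, e x' y' & (x' != x) || (y' != y)]) ->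
  False.
Proof.
move=> F cX cY xX xY yY yX exy H; apply: (EL F exy).
case: H => [[z [zX zY]] | [x' [y' [x'X y'Y ex'y' neq]]]].
- apply: (connect_trans (y := z)).
    by apply: (rst_avoid (X := X)); [rewrite yX orbT | apply: cX].
  by apply: (rst_avoid (X := Y)); [rewrite xY | apply: cY].
- apply: (connect_trans (y := x')).
    by apply: (rst_avoid (X := X)); [rewrite yX orbT | apply: cX].
  apply: (connect_trans (y := y')).
    apply: connect1; rewrite /eavoid ex'y' /=.
    apply/negP => /orP[] /andP[/eqP ? /eqP ?]; subst.
      by rewrite !eqxx in neq.
    by rewrite x'X in yX.
  by apply: (rst_avoid (X := Y)); [rewrite xY | apply: cY].
Qed.

Lemma first_exit (T : eqType) (K : pred T) p s :
  K p -> ~~ K (last p s) ->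
  exists s1 w s2, [/\ s = s1 ++ w :: s2, K (last p s1) & ~~ K w].
Proof.
elim: s p => [|a s IH] p Kp /=; first by rewrite Kp.
case Ka: (K a) => Kl.
- have [s1 [w [s2 [-> H1 H2]]]] := IH a Ka Kl.
  by exists (a :: s1), w, s2.
- by exists [::], a, s; rewrite Ka.
Qed.

Lemma rst_in (V : finType) (e : rel V) (Z : {set V}) a b :
  connect (rst e Z) a b -> a \in Z -> b \in Z.
Proof.
move=> /connectP [s ps ->]; elim: s a ps => [|c s IH] a //= /andP[/and3P[_ _ cZ] ps] _.
exact: IH.
Qed.

Lemma lemI (V : finType) (e : rel V) (X Y : {set V}) p q :
  forest e -> conn e X -> conn e Y -> p \in X -> q \in X -> p \in Y -> q \in Y ->
  connect (rst e (X :&: Y)) p q.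
Proof.
move=> F cX cY pX qX pY qY; apply/idPn => nc.
have sym : symmetric e by case: F => [[]].
pose K := fun z => connect (rst e (X :&: Y)) p z.
have /connectP [s ps qE] := cX p q pX qX.
have : last p s = q by rewrite qE.
case: (shortenP ps) => s' ps' us' _ Hl; clear ps qE s.
have Kp : K p by exact: connect0.
have nKq : ~~ K (last p s') by rewrite Hl.
have [s1 [w [s2 [sE Ku nKw]]]] := first_exit Kp nKq.
set u := last p s1 in Ku.
have pXY : p \in X :&: Y by rewrite inE pX pY.
have uXY : u \in X :&: Y by exact: rst_in Ku pXY.
move: ps'; rewrite sE cat_path -/u => /andP[_] /= /andP[/and3P[euw uX wX] pw].
have wY : w \notin Y.
  apply/negP => wY; move/negP: nKw; apply; apply: (connect_trans Ku).
  by apply: connect1; rewrite /rst euw uXY inE wX wY.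
apply: (EL F euw).
apply: (connect_trans (y := q)).
  apply: (rst_avoid (X := Y)); first by rewrite wY orbT.
  by apply: cY; [move: uXY; rewrite inE => /andP[] | ].
rewrite (sym_connect_sym (eavoid_sym u w sym)).
apply/connectP; exists s2; last by rewrite -Hl sE last_cat.
have uin : u \in p :: s1 by rewrite /u mem_last.
have nu : all (predC1 u) (w :: s2).
  apply/allP => z zin /=; apply/eqP => zu; subst z.
  move: us'; rewrite sE -cat_cons cat_uniq => /and3P[_ /hasPn H _].
  by move: (H u zin); rewrite uin.
apply: (sub_in_path _ nu pw) => a b /= au bu /and3P[eab _ _].
rewrite /eavoid eab /=; apply/negP => /orP[] /andP[/eqP aE /eqP bE].
  by move: au; rewrite aE !inE /= eqxx.
by move: bu; rewrite bE !inE /= eqxx.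
Qed.

Definition touch (V : finType) (e : rel V) (X Y : {set V}) : Prop :=
  (exists v, v \in X /\ v \in Y) \/ (exists x y, [/\ x \in X, y \in Y & e x y]).
Definition acomp (V : finType) (e : rel V) (X Y : {set V}) : Prop :=
  (forall v, v \in X -> v \in Y -> False) /\
  (forall x y, x \in X -> y \in Y -> e x y -> False).

Lemma lemSep (V : finType) (e : rel V) (Z P Q : {set V}) p q :
  connect (rst e Z) p q -> (forall z, z \in Z -> (z \in P) || (z \in Q)) ->
  acomp e P Q -> p \in P -> q \in P.
Proof.
move=> /connectP [s ps ->] HZ [_ nE]; elim: s p ps => [|b s IH] p //= /andP[/and3P[epb pZ bZ] ps] pP.
apply: IH ps _; case/orP: (HZ b bZ) => // bQ.
by exfalso; apply: (nE p b).
Qed.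

Lemma conn_merge (V : finType) (e : rel V) (X Y : {set V}) :
  symmetric e -> conn e X -> conn e Y -> touch e X Y -> conn e (X :|: Y).
Proof.
move=> sym cX cY T.
have rs : connect_sym (rst e (X :|: Y)).
  apply: sym_connect_sym => a b; rewrite /rst sym.
  by case: (a \in _); case: (b \in _); rewrite ?andbF ?andbT.
have mX := rst_mono (subsetUl X Y).
have mY := rst_mono (subsetUr X Y).
have cross : forall a b, a \in X -> b \in Y -> connect (rst e (X :|: Y)) a b.
  move=> a b aX bY; case: T => [[v [vX vY]] | [x [y [xX yY exy]]]].
  - apply: (connect_trans (y := v)); first exact: mX (cX _ _ aX vX).
    exact: mY (cY _ _ vY bY).
  - apply: (connect_trans (y := x)); first exact: mX (cX _ _ aX xX).
    apply: (connect_trans (y := y)); last exact: mY (cY _ _ yY bY).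
    by apply: connect1; rewrite /rst exy !inE xX yY orbT.
move=> a b; rewrite !inE => /orP[aX|aY] /orP[bX|bY].
- exact: mX (cX _ _ aX bX).
- exact: cross.
- by rewrite rs; apply: cross.
- exact: mY (cY _ _ aY bY).
Qed.

Lemma touch_monol (V : finType) (e : rel V) (X X' Y : {set V}) :
  X \subset X' -> touch e X Y -> touch e X' Y.
Proof.
move=> /subsetP s [[v [vX vY]] | [x [y [xX yY exy]]]].
- by left; exists v; split => //; apply: s.
- by right; exists x, y; split => //; apply: s.
Qed.

Lemma touch_sym (V : finType) (e : rel V) (X Y : {set V}) :
  symmetric e -> touch e X Y -> touch e Y X.
Proof.
move=> sym [[v [vX vY]] | [x [y [xX yY exy]]]].
- by left; exists v.
- by right; exists y, x; split => //; rewrite sym.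
Qed.

Lemma touch_monor (V : finType) (e : rel V) (X Y Y' : {set V}) :
  symmetric e -> Y \subset Y' -> touch e X Y -> touch e X Y'.
Proof.
move=> sym s T; apply: touch_sym => //; apply: touch_monol s _.
exact: touch_sym.
Qed.

Lemma lemFS (V : finType) (e : rel V) (A B C D : {set V}) :
  forest e -> conn e A -> conn e B -> conn e C -> conn e D ->
  acomp e A C -> acomp e B D ->
  touch e A B -> touch e B C -> touch e C D -> touch e D A -> False.
Proof.
move=> F cA cB cC cD [ACv ACe] [BDv BDe] tAB tBC tCD tDA.
have sym : symmetric e by case: F => [[]].
have cBC := conn_merge sym cB cC tBC.
have cY : conn e (B :|: C :|: D).
  by apply: conn_merge => //; apply: touch_monol tCD; apply: subsetUr.
case: (boolP [exists v, (v \in A) && (v \in B)]) => [/existsP [p /andP[pA pB]] | nAB];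
case: (boolP [exists v, (v \in A) && (v \in D)]) => [/existsP [q /andP[qA qD]] | nAD].
- have pY : p \in B :|: C :|: D by rewrite !inE pB.
  have qY : q \in B :|: C :|: D by rewrite !inE qD !orbT.
  have H := lemI F cA cY pA qA pY qY.
  have qB : q \in B.
    apply: (lemSep (Q := D) H) => //.
    move=> z; rewrite !inE => /andP[zA]; case/orP => [/orP[->//|zC]|->].
      by exfalso; apply: (ACv z).
    by rewrite orbT.
  exact: (BDv q).
- have [d [a [dD aA eda]]] : exists d a, [/\ d \in D, a \in A & e d a].
    case: tDA => [[v [vD vA]] | //].
    by exfalso; move/negP: nAD; apply; apply/existsP; exists v; rewrite vA vD.
  have aD : a \notin D by apply/negP => aD; move/negP: nAD; apply; apply/existsP; exists a; rewrite aA.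
  have dA : d \notin A by apply/negP => dA; move/negP: nAD; apply; apply/existsP; exists d; rewrite dA.
  apply: (lemK (X := A :|: B) (Y := C :|: D) (x := a) (y := d) F).
  + exact: conn_merge sym cA cB tAB.
  + exact: conn_merge sym cC cD tCD.
  + by rewrite inE aA.
  + rewrite !inE negb_or (negbTE aD) andbT; apply/negP => aC; exact: (ACv a).
  + by rewrite inE dD orbT.
  + rewrite !inE negb_or (negbTE dA) /=; apply/negP => dB; exact: (BDv d).
  + by rewrite sym.
  + case: tBC => [[v [vB vC]] | [b [c [bB cC0 ebc]]]].
      by left; exists v; rewrite !inE vB vC orbT.
    right; exists b, c; split; [by rewrite inE bB orbT | by rewrite inE cC0 | by [] |].
    apply/orP; right; apply/eqP => cd; subst c.
    exact: (BDe b d).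
- have [a [b [aA bB eab]]] : exists a b, [/\ a \in A, b \in B & e a b].
    case: tAB => [[v [vA vB]] | //].
    by exfalso; move/negP: nAB; apply; apply/existsP; exists v; rewrite vA vB.
  have aB : a \notin B by apply/negP => aB; move/negP: nAB; apply; apply/existsP; exists a; rewrite aA.
  have bA : b \notin A by apply/negP => bA; move/negP: nAB; apply; apply/existsP; exists b; rewrite bA.
  apply: (lemK (X := A :|: D) (Y := B :|: C) (x := a) (y := b) F).
  + by apply: conn_merge => //; apply: touch_sym.
  + exact: cBC.
  + by rewrite inE aA.
  + rewrite !inE negb_or (negbTE aB) /=; apply/negP => aC; exact: (ACv a).
  + by rewrite inE bB.
  + rewrite !inE negb_or (negbTE bA) /=; apply/negP => bD; exact: (BDv b).
  + exact: eab.
  + case: tCD => [[v [vC vD]] | [c [d [cC0 dD ecd]]]].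
      by left; exists v; rewrite !inE vC vD !orbT.
    right; exists d, c; split; [by rewrite inE dD orbT | by rewrite inE cC0 orbT | by rewrite sym |].
    apply/orP; right; apply/eqP => cb; subst c.
    exact: (BDe b d).
- have [a [b [aA bB eab]]] : exists a b, [/\ a \in A, b \in B & e a b].
    case: tAB => [[v [vA vB]] | //].
    by exfalso; move/negP: nAB; apply; apply/existsP; exists v; rewrite vA vB.
  have [d [a' [dD aA' eda]]] : exists d a, [/\ d \in D, a \in A & e d a].
    case: tDA => [[v [vD vA]] | //].
    by exfalso; move/negP: nAD; apply; apply/existsP; exists v; rewrite vA vD.
  apply: (lemK (X := A) (Y := B :|: C :|: D) (x := a) (y := b) F) => //.
  + have aB : a \notin B.
      by apply/negP => H; move/negP: nAB; apply; apply/existsP; exists a; rewrite aA.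
    have aC : a \notin C by apply/negP => H; exact: (ACv a).
    have aD : a \notin D.
      by apply/negP => H; move/negP: nAD; apply; apply/existsP; exists a; rewrite aA.
    by rewrite !inE (negbTE aB) (negbTE aC) (negbTE aD).
  + by rewrite !inE bB.
  + by apply/negP => bA; move/negP: nAB; apply; apply/existsP; exists b; rewrite bA.
  + right; exists a', d; split => //; first by rewrite !inE dD orbT.
    by rewrite sym.
    apply/orP; right; apply/eqP => db; subst d.
    exact: (BDv b).
Qed.

Lemma h_touch (V : finType) (e : rel V) l (S : 'I_l -> {set V}) i j :
  touch_graph e S i j -> touch e (S i) (S j).
Proof.
rewrite /touch_graph /anticomplete => /andP[_]; case/nandP => [nd | nf].
- left; move: nd; rewrite -setI_eq0 => /set0Pn [v]; rewrite inE => /andP[vi vj].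
  by exists v.
- right; move/forallPn: nf => [x]; rewrite negb_imply => /andP[xA /forallPn [y]].
  by rewrite negb_imply negbK => /andP[yB exy]; exists x, y.
Qed.

Lemma nh_acomp (V : finType) (e : rel V) l (S : 'I_l -> {set V}) i j :
  i != j -> ~~ touch_graph e S i j -> acomp e (S i) (S j).
Proof.
rewrite /touch_graph => ij; rewrite ij /= negbK /anticomplete => /andP[dis fa].
split.
- move=> v vi vj; move: dis; rewrite -setI_eq0 => /eqP H.
  by have := in_set0 v; rewrite -H inE vi vj.
- move=> x y xi yj exy; move/forallP: fa => /(_ x); rewrite xi /= => /forallP /(_ y).
  by rewrite yj exy.
Qed.

Fixpoint Ucup (V : finType) l (S : 'I_l -> {set V}) (t : seq 'I_l) : {set V} :=
  if t is i :: t' then S i :|: Ucup S t' else set0.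

Lemma Ucup_sub (V : finType) l (S : 'I_l -> {set V}) t j :
  j \in t -> S j \subset Ucup S t.
Proof.
elim: t => [|i t IH] //=; rewrite inE => /orP[/eqP -> | jt].
  exact: subsetUl.
exact: subset_trans (IH jt) (subsetUr _ _).
Qed.

Lemma Ucup_acomp (V : finType) (e : rel V) l (S : 'I_l -> {set V}) A t :
  (forall j, j \in t -> acomp e A (S j)) -> acomp e A (Ucup S t).
Proof.
elim: t => [|i t IH] H /=.
  by split => [v _|x y _]; rewrite inE.
have [IH1 IH2] := IH (fun j jt => H j (mem_behead (s := i :: t) jt)).
have [H1 H2] := H i (mem_head _ _).
split.
- by move=> v vA; rewrite inE => /orP[]; [apply: H1 | apply: IH1].
- by move=> x y xA; rewrite inE => /orP[]; [apply: H2 | apply: IH2].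
Qed.

Lemma Ucup_conn (V : finType) (e : rel V) l (S : 'I_l -> {set V}) i t :
  symmetric e -> (forall k, conn e (S k)) -> path (touch_graph e S) i t ->
  conn e (Ucup S (i :: t)).
Proof.
move=> sym cS; elim: t i => [|j t IH] i /=.
  move=> _; rewrite setU0; exact: cS.
move=> /andP[hij pt]; apply: conn_merge => //; first exact: IH.
apply: (touch_monor sym (Ucup_sub S (mem_head j t))).
exact: h_touch.
Qed.

Lemma nocycle (V : finType) (e : rel V) l (S : 'I_l -> {set V}) :
  forest e -> (forall k, conn e (S k)) -> bipartite (touch_graph e S) ->
  forall n c, size c <= n -> ~~ is_cycle (touch_graph e S) c.
Proof.
move=> F cS [col Hcol].
have sym : symmetric e by case: F => [[]].
set h := touch_graph e S.
have hsym : symmetric h.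
  move=> i j; rewrite /h /touch_graph eq_sym; congr (_ && ~~ _).
  rewrite /anticomplete disjoint_sym; congr (_ && _).
  apply/idP/idP => /forall_inP H; apply/forall_inP => x xin;
    apply/forall_inP => y yin; rewrite sym; exact: (forall_inP (H y yin) x xin).
elim=> [|n IH] c.
  by rewrite leqn0 => /eqP sc; rewrite /is_cycle sc.
move=> sc; apply/negP; rewrite /is_cycle => /andP[/andP[s2 cyc] uc].
case: c sc s2 cyc uc => [|x1 [|x2 s3]] //= sc s2 cyc uc.
case/lastP: s3 sc s2 cyc uc => [|m xn] //= sc s2 cyc uc.
rewrite rcons_path /= rcons_path last_rcons in cyc.
move/and3P: cyc => [h12 /andP[pm hmn] hn1].
case: m sc s2 pm hmn uc => [|x3 m'] sc s2 pm hmn uc.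
  move: (Hcol _ _ h12) (Hcol _ _ hmn) (Hcol _ _ hn1) => /=.
  by case: (col x1); case: (col x2); case: (col xn).
case H2n: (h x2 xn).
  have Hsz : size (x2 :: rcons (x3 :: m') xn) <= n.
    by move: sc; rewrite /= !size_rcons.
  apply: (negP (IH _ Hsz)).
  rewrite /is_cycle /= size_rcons ltnS ltnS /= rcons_path /= rcons_path.
  by move: (pm) (hmn) (uc) => /= /andP[-> ->] -> /and3P[_ ->]; rewrite last_rcons (hsym xn) H2n /=.
set m := x3 :: m' in sc s2 pm hmn uc.
case: (boolP (has (h x1) m)) => [/hasP [j jm h1j] | nh].
  case/splitPr: jm sc s2 pm hmn uc => m1 m2 sc s2 pm hmn uc.
  have Hsz : size (x1 :: j :: rcons m2 xn) <= n.
    move: sc; rewrite /= !size_rcons size_cat /= !ltnS => H.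
    apply: leq_trans H; lia.
  apply: (negP (IH _ Hsz)).
  move: pm; rewrite cat_path => /andP[_] /= /andP[_ pm2].
  rewrite /is_cycle /= size_rcons ltnS ltnS /= h1j rcons_path /= rcons_path pm2.
  rewrite last_cat /= in hmn.
  rewrite last_rcons hmn hn1 /=.
  move: uc; rewrite rcons_cat /= => /and3P[x1L _ uL].
  apply/andP; split.
    apply/negP => H; move/negP: x1L; apply.
    by rewrite inE mem_cat H !orbT.
  by move: uL; rewrite cat_uniq => /and3P[_ _ H]; exact: H.
(* the chordless configuration *)
move: uc => /and3P[u1 u2 _].
have x1m : x1 \notin m.
  by apply: contra u1 => H; rewrite in_cons mem_rcons in_cons H !orbT.
have x2n : x2 != xn.
  by apply: contra u2 => /eqP ->; rewrite mem_rcons mem_head.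
have cC : conn e (Ucup S m) by apply: Ucup_conn => //; case/andP: pm.
apply: (lemFS F (cS x1) (cS x2) cC (cS xn)).
- apply: Ucup_acomp => j jm; apply: nh_acomp.
    by apply/eqP => E; subst j; rewrite jm in x1m.
  by move/hasPn: nh; apply.
- by apply: nh_acomp => //; rewrite /h in H2n; rewrite H2n.
- exact: h_touch h12.
- apply: (touch_monor sym (Ucup_sub S (mem_head x3 m'))).
  by move: pm => /= /andP[H _]; apply: h_touch H.
- apply: (touch_monol (Ucup_sub S (mem_last x3 m'))).
  exact: h_touch hmn.
- exact: h_touch hn1.
Qed.

Theorem mainTheorem5 (V : finType) (e : rel V) (l : nat)
  (S : 'I_l -> {set V}) (E : 'I_l -> rel V) :
  forest e ->
  (forall i, tree_of e (S i) (E i)) ->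
  bipartite (touch_graph e S) ->
  forest (touch_graph e S).
Proof.
move=> F T B.
have sym : symmetric e by case: F => [[]].
have cS : forall k, conn e (S k).
  move=> k a b aS bS; have [[_ sub] [_ [cE _]]] := T k.
  apply: connect_sub (cE a b aS bS) => x y /sub H.
  exact: connect1.
split; last by move=> c; apply: (nocycle F cS B (leqnn (size c))).
split.
- by move=> i; rewrite /touch_graph eqxx.
- move=> i j; rewrite /touch_graph eq_sym; congr (_ && ~~ _).
  rewrite /anticomplete disjoint_sym; congr (_ && _).
  apply/idP/idP => /forall_inP H; apply/forall_inP => x xin;
    apply/forall_inP => y yin; rewrite sym; exact: (forall_inP (H y yin) x xin).
Qed.
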